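(* Let $\{A,T',U',R,Q\}$ be a data set for the relaxed commutant lifting problem, let $\mathcal{F}=\overline{D_AQ\mathcal{H}_0}\subseteq\mathcal{D}_A$, and set $\mathcal{G}=\mathcal{D}_A\ominus\mathcal{F}$. Then $\overline{D_A\mathcal{G}}$ is orthogonal to both $Q\mathcal{H}_0$ and $\operatorname{Ker} D_A$. In particular, $\mathcal{F}=\mathcal{D}_A$ whenever $\overline{Q\mathcal{H}_0}\vee\operatorname{Ker}D_A=\mathcal{H}$.
   Context: $D_A=(I-A^*A)^{1/2}$ and $\mathcal{D}_A=\overline{D_A\mathcal{H}}$. For subspaces $\mathcal{M}_1,\mathcal{M}_2$, $\mathcal{M}_1\vee\mathcal{M}_2$ is the closed linear span. For a subspace $\mathcal{V}$ of a Hilbert space $\mathcal{W}$, $\Pi_{\mathcal{V}}$ denotes the orthogonal projection of $\mathcal{W}$ onto $\mathcal{V}$. A data set $\{A,T',U',R,Q\}$ consists of: a contraction $A:\mathcal{H}\to\mathcal{H}'$; a contraction $T'$ on $\mathcal{H}'$; a minimal isometric lifting $U'$ of $T'$, i.e. an isometry $U'$ on a Hilbert space $\mathcal{K}'\supseteq\mathcal{H}'$ such that $\mathcal{H}'$ is cyclic for $U'$ and $\Pi_{\mathcal{H}'}U'=T'\Pi_{\mathcal{H}'}$; and operators $R,Q:\mathcal{H}_0\to\mathcal{H}$ with $T'AR=AQ$ and $R^*R\le Q^*Q$. *)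

(* Defs.v *)
From HB Require Import structures.
From mathcomp Require Import all_boot all_order all_algebra.
From mathcomp Require Import reals complex.
Set Implicit Arguments. Unset Strict Implicit. Unset Printing Implicit Defensive.
Import Order.TTheory GRing.Theory Num.Theory.
Local Open Scope ring_scope.

Section HilbertDef.
Variable R : realType.
Local Notation C := (complex R).

Definition inner_norm (V : lmodType C) (ip : V -> V -> C) (x : V) : R :=
  Num.sqrt (complex.Re (ip x x)).

Record hilbert := Hilbert {
  hsort :> lmodType C;
  hinner : hsort -> hsort -> C;
  hinnerDl : forall (a : C) (x y z : hsort),
      hinner (a *: x + y) z = a * hinner x z + hinner y z;
  hinnerC : forall x y : hsort, hinner y x = conjc (hinner x y);
  hinner_ge0 : forall x : hsort, 0 <= hinner x x;
  hinner_eq0 : forall x : hsort, hinner x x = 0 -> x = 0;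
  hcomplete : forall u : nat -> hsort,
      (forall e : R, 0 < e -> exists N : nat, forall m n : nat,
          (N <= m)%N -> (N <= n)%N -> inner_norm hinner (u m - u n) < e) ->
      exists l : hsort, forall e : R, 0 < e -> exists N : nat, forall n : nat,
          (N <= n)%N -> inner_norm hinner (u n - l) < e
}.

Definition hnorm (H : hilbert) (x : H) : R := inner_norm (@hinner H) x.

Definition hclosure (H : hilbert) (S : H -> Prop) : H -> Prop :=
  fun x => forall e : R, 0 < e -> exists s, S s /\ hnorm (x - s) < e.

Definition closed_subspace (H : hilbert) (M : H -> Prop) : Prop :=
  [/\ M 0,
      (forall (a : C) (x y : H), M x -> M y -> M (a *: x + y))
    & (forall x, hclosure M x -> M x)].

Definition cspan (H : hilbert) (S : H -> Prop) : H -> Prop :=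
  fun x => forall M, closed_subspace M -> (forall y, S y -> M y) -> M x.

Definition join_sub (H : hilbert) (M1 M2 : H -> Prop) : H -> Prop :=
  cspan (fun x => M1 x \/ M2 x).

Definition himage (H1 H2 : hilbert) (f : H1 -> H2) (S : H1 -> Prop) : H2 -> Prop :=
  fun y => exists x, S x /\ y = f x.
Definition hrange (H1 H2 : hilbert) (f : H1 -> H2) : H2 -> Prop :=
  fun y => exists x, y = f x.
Definition hker (H1 H2 : hilbert) (f : H1 -> H2) : H1 -> Prop :=
  fun x => f x = 0.

Definition orthogonal_sets (H : hilbert) (S T : H -> Prop) : Prop :=
  forall x y, S x -> T y -> hinner x y = 0.

Definition ominus (H : hilbert) (M N : H -> Prop) : H -> Prop :=
  fun x => M x /\ forall y, N y -> hinner x y = 0.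

Definition bounded_op (H1 H2 : hilbert) (f : H1 -> H2) : Prop :=
  linear f /\ exists M : R, forall x, hnorm (f x) <= M * hnorm x.

Definition contraction (H1 H2 : hilbert) (f : H1 -> H2) : Prop :=
  bounded_op f /\ forall x, hnorm (f x) <= hnorm x.

Definition isometry (H1 H2 : hilbert) (f : H1 -> H2) : Prop :=
  bounded_op f /\ forall x, hnorm (f x) = hnorm x.

Definition is_adjoint (H1 H2 : hilbert) (f : H1 -> H2) (fs : H2 -> H1) : Prop :=
  bounded_op f /\ bounded_op fs /\ forall x y, hinner (f x) y = hinner x (fs y).

(* D is the positive square root of the positive operator T,
   i.e. D is bounded, selfadjoint, positive, and D^2 = T.
   (The positive square root is unique, so this determines D.) *)
Definition is_pos_sqrt (H : hilbert) (T D : H -> H) : Prop :=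
  [/\ is_adjoint D D, forall x, 0 <= hinner (D x) x & forall x, D (D x) = T x].

(* U' on K' is a minimal isometric lifting of T' on H', where H' is
   identified with a subspace of K' through the isometric embedding J
   (so that Pi_{H'} corresponds to the adjoint Js of J). *)
Definition minimal_isometric_lifting (H' K' : hilbert) (T' : H' -> H')
    (J : H' -> K') (Js : K' -> H') (U' : K' -> K') : Prop :=
  [/\ isometry J, is_adjoint J Js, isometry U',
      (forall k, cspan (fun y => exists n (h : H'), y = iter n U' (J h)) k)
    &
      (forall k, Js (U' k) = T' (Js k))].

End HilbertDef.

(* Main.v *)
Require Import Defs.
From HB Require Import structures.
From mathcomp Require Import all_boot all_order all_algebra.
From mathcomp Require Import lra ring.
From mathcomp Require Import reals complex.
Import Order.TTheory GRing.Theory Num.Theory.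
Set Implicit Arguments. Unset Strict Implicit.
Local Open Scope ring_scope.
Local Open Scope complex_scope.

Section H.
Variable R : realType.
Variable H : hilbert R.
Local Notation C := (complex R).
Implicit Types x y z u v : H.

Lemma ip0l z : hinner (0 : H) z = 0.
Proof.
have := hinnerDl 1 (0 : H) 0 z.
rewrite scaler0 addr0 mul1r => h.
by have := congr1 (fun t => t - hinner (0:H) z) h; rewrite subrr addrK.
Qed.

Lemma ipZl (a : C) x z : hinner (a *: x) z = a * hinner x z.
Proof. by have := hinnerDl a x 0 z; rewrite addr0 ip0l addr0. Qed.

Lemma ipDl x y z : hinner (x + y) z = hinner x z + hinner y z.
Proof. by have := hinnerDl 1 x y z; rewrite scale1r mul1r. Qed.

Lemma ipNl x z : hinner (- x) z = - hinner x z.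
Proof. by rewrite -scaleN1r ipZl mulN1r. Qed.

Lemma ipBl x y z : hinner (x - y) z = hinner x z - hinner y z.
Proof. by rewrite ipDl ipNl. Qed.

Lemma ip0r z : hinner z (0 : H) = 0.
Proof. by rewrite hinnerC ip0l conjc0. Qed.

Lemma conjcD (a b : C) : conjc (a + b) = conjc a + conjc b.
Proof. by case: a => a1 a2; case: b => b1 b2 /=; rewrite opprD. Qed.

Lemma conjcM (a b : C) : conjc (a * b) = conjc a * conjc b.
Proof.
case: a => a1 a2; case: b => b1 b2 /=; congr (_ +i* _).
  by rewrite mulrNN.
by rewrite mulrN mulNr opprD.
Qed.

Lemma conjcK' (a : C) : conjc (conjc a) = a.
Proof. by case: a => a1 a2 /=; rewrite opprK. Qed.

Lemma ipZr (a : C) x z : hinner z (a *: x) = conjc a * hinner z x.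
Proof. by rewrite hinnerC ipZl conjcM -hinnerC. Qed.

Lemma ipDr x y z : hinner z (x + y) = hinner z x + hinner z y.
Proof. by rewrite hinnerC ipDl conjcD -!hinnerC. Qed.

Lemma ipNr x z : hinner z (- x) = - hinner z x.
Proof. by rewrite -scaleN1r ipZr /= oppr0 mulN1r. Qed.

Lemma ipBr x y z : hinner z (x - y) = hinner z x - hinner z y.
Proof. by rewrite ipDr ipNr. Qed.

Definition n2 x : R := complex.Re (hinner x x).

Lemma ipxx x : hinner x x = (n2 x)%:C.
Proof.
rewrite /n2; have := hinner_ge0 x; case: (hinner x x) => a b.
by rewrite lecE /= => /andP [/eqP -> _].
Qed.

Lemma n2_ge0 x : 0 <= n2 x.
Proof. by have := hinner_ge0 x; rewrite ipxx lecR. Qed.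

Lemma n2_eq0 x : n2 x = 0 -> x = 0.
Proof. by move=> h; apply: hinner_eq0; rewrite ipxx h. Qed.

Lemma hnormE x : hnorm x = Num.sqrt (n2 x).
Proof. by []. Qed.

Lemma hnorm_ge0 x : 0 <= hnorm x.
Proof. exact: sqrtr_ge0. Qed.

Lemma hnorm_sqr x : hnorm x ^+ 2 = n2 x.
Proof. by rewrite hnormE sqr_sqrtr // n2_ge0. Qed.

Lemma hnorm_eq0 x : hnorm x = 0 -> x = 0.
Proof. by move=> h; apply: n2_eq0; rewrite -hnorm_sqr h expr0n. Qed.

Lemma hnorm0 : hnorm (0 : H) = 0.
Proof. by rewrite hnormE /n2 ip0l /= sqrtr0. Qed.

Lemma Re_conj (a : C) : complex.Re (conjc a) = complex.Re a.
Proof. by case: a. Qed.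

Lemma ReD (a b : C) : complex.Re (a + b) = complex.Re a + complex.Re b.
Proof. by case: a; case: b. Qed.

Lemma n2D x y : n2 (x + y) = n2 x + n2 y + 2 * complex.Re (hinner x y).
Proof.
rewrite /n2 ipDl !ipDr [hinner y x]hinnerC !ReD Re_conj; lra.
Qed.


Lemma n2Z (c : C) x :
  n2 (c *: x) = (complex.Re c ^+ 2 + complex.Im c ^+ 2) * n2 x.
Proof.
rewrite /n2 ipZl ipZr ipxx; case: c => a b /=; ring.
Qed.

Definition nc (c : C) : R := Num.sqrt (complex.Re c ^+ 2 + complex.Im c ^+ 2).

Lemma nc_ge0 c : 0 <= nc c. Proof. exact: sqrtr_ge0. Qed.

Lemma hnormZ (c : C) x : hnorm (c *: x) = nc c * hnorm x.
Proof.
by rewrite !hnormE n2Z sqrtrM // addr_ge0 // sqr_ge0.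
Qed.

Lemma hnormN x : hnorm (- x) = hnorm x.
Proof.
by rewrite -scaleN1r hnormZ /nc /= oppr0 expr0n /= addr0 sqrrN expr1n sqrtr1 mul1r.
Qed.

Lemma Re_ip_le x y : complex.Re (hinner x y) <= hnorm x * hnorm y.
Proof.
set a := hnorm y; set b := hnorm x.
have a0 : 0 <= a by exact: hnorm_ge0.
have b0 : 0 <= b by exact: hnorm_ge0.
have key : a * b * complex.Re (hinner x y) <= a ^+ 2 * b ^+ 2.
  have := n2_ge0 (a%:C *: x + (- b)%:C *: y).
  rewrite n2D !n2Z -!hnorm_sqr -/a -/b ipZl ipZr /=.
  case: (hinner x y) => p q /=.
 move=> h.
nra.
have [a_eq0|a_gt0] := eqVneq a 0.
  have -> : y = 0 by apply: hnorm_eq0.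
  by rewrite ip0r /= mulr_ge0.
have [b_eq0|b_gt0] := eqVneq b 0.
  have -> : x = 0 by apply: hnorm_eq0.
  by rewrite ip0l /= mulr_ge0.
have ab : 0 < a * b by rewrite mulr_gt0 // lt0r ?a_gt0 ?b_gt0.
rewrite -(ler_pM2l ab); rewrite mulrC [b * a]mulrC; nra.
Qed.

Lemma hnormD x y : hnorm (x + y) <= hnorm x + hnorm y.
Proof.
have h0 : 0 <= hnorm x + hnorm y by rewrite addr_ge0 ?hnorm_ge0.
rewrite -(ger0_norm h0) -sqrtr_sqr hnormE ler_sqrt ?sqr_ge0 // n2D -!hnorm_sqr.
have := Re_ip_le x y; nra.
Qed.


Lemma hnormB x y : hnorm (x - y) = hnorm (y - x).
Proof. by rewrite -hnormN opprB. Qed.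

Lemma cl_sub (S : H -> Prop) x : S x -> hclosure S x.
Proof. by move=> Sx e e0; exists x; split=> //; rewrite subrr hnorm0. Qed.

Lemma cl_mono (S T : H -> Prop) x :
  (forall y, S y -> T y) -> hclosure S x -> hclosure T x.
Proof.
move=> ST cx e e0; have [s [Ss hs]] := cx e e0; exists s; split=> //; exact: ST.
Qed.

Lemma cl_idem (S : H -> Prop) x : hclosure (hclosure S) x -> hclosure S x.
Proof.
move=> cx e e0.
have e2 : 0 < e / 2 by rewrite divr_gt0.
have [s [Ss hs]] := cx _ e2.
have [t [St ht]] := Ss _ e2.
exists t; split=> //.
have -> : x - t = (x - s) + (s - t) by rewrite addrA subrK.
apply: (le_lt_trans (hnormD _ _)).
have -> : e = e / 2 + e / 2 by rewrite -splitr.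
exact: ltrD.
Qed.

Lemma nc_conj (c : C) :
  nc (conjc c) = Num.sqrt (complex.Re c ^+ 2 + complex.Im c ^+ 2).
Proof. by case: c => a b; rewrite /nc /= sqrrN. Qed.

Lemma Re_conjM (c : C) :
  complex.Re (conjc c * c) = complex.Re c ^+ 2 + complex.Im c ^+ 2.
Proof. by case: c => a b /=; ring. Qed.

Lemma cl_orth (S : H -> Prop) x y :
  (forall s, S s -> hinner s y = 0) -> hclosure S x -> hinner x y = 0.
Proof.
move=> So cx.
set c := hinner x y.
set m := complex.Re c ^+ 2 + complex.Im c ^+ 2.
have m0 : 0 <= m by rewrite addr_ge0 // sqr_ge0.
have [m_eq0|m_neq0] := eqVneq m 0.
  move: m_eq0; rewrite /m /c; case: (hinner x y) => a b /= h.
  have a0 : a = 0 by nra.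
  have b0 : b = 0 by nra.
  by rewrite a0 b0.
have mpos : 0 < m by rewrite lt0r m_neq0.
have sm : 0 < Num.sqrt m by rewrite sqrtr_gt0.
have ny0 := hnorm_ge0 y.
have ey : 0 < hnorm y + 1 by lra.
have [s [Ss hs]] := cx (Num.sqrt m / (hnorm y + 1)) (divr_gt0 sm ey).
set u := x - s.
have huy : hinner u y = c by rewrite /u ipBl (So s Ss) subr0.
have := Re_ip_le (conjc c *: u) y.
rewrite ipZl huy hnormZ.
rewrite nc_conj Re_conjM -/m.
have nu0 := hnorm_ge0 u.
have h1 : hnorm u * (hnorm y + 1) < Num.sqrt m by rewrite -ltr_pdivlMr.
have sq : Num.sqrt m * Num.sqrt m = m by rewrite -expr2 sqr_sqrtr.
move=> h; exfalso.
have h2 : hnorm u * hnorm y < Num.sqrt m by nra.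
have : Num.sqrt m * (hnorm u * hnorm y) < Num.sqrt m * Num.sqrt m by rewrite ltr_pM2l.
rewrite sq; nra.
Qed.

End H.

Section Ops.
Variable R : realType.
Variables H1 H2 : hilbert R.
Local Notation C := (complex R).


Lemma lin_0 (f : H1 -> H2) : linear f -> f 0 = 0.
Proof.
move=> lf; have := lf (-1) 0 0.
rewrite scaleN1r oppr0 addr0 scaleN1r addNr; done.
Qed.

Lemma lin_D (f : H1 -> H2) u v : linear f -> f (u + v) = f u + f v.
Proof. by move=> lf; have := lf 1 u v; rewrite !scale1r. Qed.

Lemma lin_Z (f : H1 -> H2) (a : C) u : linear f -> f (a *: u) = a *: f u.
Proof. by move=> lf; have := lf a u 0; rewrite !addr0 lin_0 // addr0. Qed.

Lemma lin_B (f : H1 -> H2) u v : linear f -> f (u - v) = f u - f v.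
Proof.
move=> lf; rewrite lin_D // -scaleN1r lin_Z // scaleN1r //.
Qed.

Lemma bounded_pos (f : H1 -> H2) : bounded_op f ->
  exists B : R, 0 < B /\ forall x, hnorm (f x) <= B * hnorm x.
Proof.
move=> [_ [M hM]]; exists (`|M| + 1); split; first by rewrite ltr_wpDl.
move=> x; apply: (le_trans (hM x)).
have := hnorm_ge0 x; have := ler_norm M; nra.
Qed.

Lemma cl_image (f : H1 -> H2) (S : H1 -> Prop) (T : H2 -> Prop) y :
  bounded_op f -> (forall m, S m -> T (f m)) -> hclosure S y -> hclosure T (f y).
Proof.
move=> bf ST cy e e0.
have [B [B0 hB]] := bounded_pos bf.
have [m [Sm hm]] := cy (e / B) (divr_gt0 e0 B0).
exists (f m); split; first exact: ST.
rewrite -lin_B; last by case: bf.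
apply: (le_lt_trans (hB _)).
by rewrite -ltr_pdivlMl // mulrC.
Qed.

End Ops.

Section Sub.
Variable R : realType.
Variable H : hilbert R.
Local Notation C := (complex R).

Lemma cl_subspace (S : H -> Prop) :
  S 0 -> (forall (a : C) x y, S x -> S y -> S (a *: x + y)) ->
  closed_subspace (hclosure S).
Proof.
move=> S0 Sl; split.
- exact: cl_sub.
- move=> a x y cx cy e e0.
  set k := nc a.
  have k0 : 0 <= k := nc_ge0 a.
  have k1 : 0 < 2 * (k + 1) by lra.
  have [s [Ss hs]] := cx (e / (2 * (k + 1))) (divr_gt0 e0 k1).
  have [t [St ht]] := cy (e / 2) (divr_gt0 e0 (ltr0Sn _ 1)).
  exists (a *: s + t); split; first exact: Sl.
  have -> : a *: x + y - (a *: s + t) = a *: (x - s) + (y - t).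
    by rewrite scalerBr opprD !addrA; congr (_ + _); rewrite -!addrA [y + _]addrC.
  apply: (le_lt_trans (hnormD _ _)); rewrite hnormZ -/k.
  have hs' : hnorm (x - s) * (2 * (k + 1)) < e by rewrite -ltr_pdivlMr.
  have hn := hnorm_ge0 (x - s).
  have : k * hnorm (x - s) <= e / 2.
    have : k * hnorm (x - s) * 2 <= e by nra.
    by rewrite -ler_pdivlMr.
  move: ht; lra.
- move=> x; exact: cl_idem.
Qed.

End Sub.

Theorem lemma3p2 (R : realType) (H H' H0 K' : hilbert R)
    (A : H -> H') (As : H' -> H) (T' : H' -> H')
    (J : H' -> K') (Js : K' -> H') (U' : K' -> K')
    (Rop Q : H0 -> H) (DA : H -> H) :
  (* the data set {A, T', U', R, Q} *)
  contraction A -> is_adjoint A As ->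
  contraction T' ->
  minimal_isometric_lifting T' J Js U' ->
  bounded_op Rop -> bounded_op Q ->
  (forall h, T' (A (Rop h)) = A (Q h)) ->
  (forall h, hinner (Rop h) (Rop h) <= hinner (Q h) (Q h)) ->
  (* D_A = (I - A^* A)^{1/2} *)
  is_pos_sqrt (fun x => x - As (A x)) DA ->
  let calDA := hclosure (hrange DA) in
  let F := hclosure (hrange (fun h => DA (Q h))) in
  let G := ominus calDA F in
  let DG := hclosure (himage DA G) in
  (orthogonal_sets DG (hrange Q) /\ orthogonal_sets DG (hker DA)) /\
  ((forall x, join_sub (hclosure (hrange Q)) (hker DA) x) ->
   forall x, F x <-> calDA x).
Proof.
move=> _ _ _ _ _ bQ _ _ [[bDA [_ adj]] _ _] calDA F G DG.
have lDA : linear DA by case: bDA.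
have lQ : linear Q by case: bQ.
split; first split.
- move=> x y Dx [h ->].
  apply: (cl_orth _ Dx) => s [g [[_ Gg] ->]].
  rewrite adj; apply: Gg; apply: cl_sub; by exists h.
- move=> x y Dx hy.
  apply: (cl_orth _ Dx) => s [g [_ ->]].
  by rewrite adj hy ip0r.
move=> hall x.
have FS : closed_subspace F.
  apply: cl_subspace.
    by exists 0; rewrite !lin_0.
  move=> a _ _ [h1 ->] [h2 ->]; exists (a *: h1 + h2).
  by rewrite lin_D // lin_Z // lin_D // lin_Z.
case: FS => F0 Fl Fc.
have key : forall y, F (DA y).
  move=> y; apply: (hall y (fun y => F (DA y))).
    split.
    - by rewrite lin_0.
    - by move=> a u v Fu Fv; rewrite lin_D // lin_Z //; apply: Fl.
    - move=> u cu; apply: Fc; exact: (cl_image bDA (fun m (h : F (DA m)) => h) cu).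
  move=> z [cq|kz].
    apply: Fc; apply: (cl_image bDA _ cq) => m [h ->]; apply: cl_sub; by exists h.
  by rewrite kz.
split.
  apply: cl_mono => y [h ->]; by exists (Q h).
move=> hx; apply: Fc; apply: (cl_mono _ hx) => y [z ->]; exact: key.
Qed.
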